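(* Let $\bm{X}\in\mathbb{R}^{d\times n}$, $1\le K\le\min\{n,d\}$, $h(\bm{P},\bm{Q})=-\langle\bm{P},\bm{X}^T\bm{Q}\rangle+\delta_{\mathcal{B}(n,K)}(\bm{P})+\delta_{{\rm St}(d,K)}(\bm{Q})$, and for $\beta\ge0$ let $\Psi_\beta(\bm{P},\bm{Q},\bm{Q}')=h(\bm{P},\bm{Q})+\frac\beta2\|\bm{Q}-\bm{Q}'\|_F^2$. Let $\{(\bm{P}^k,\bm{Q}^k)\}_{k\ge0}$ be generated by the following algorithm: start from $\bm{P}^0\in\mathcal{B}(n,K)$, $\bm{Q}^{-1}=\bm{Q}^0\in{\rm St}(d,K)$; for $k\ge0$ set $\bm{E}^k=\bm{Q}^k+\gamma_k(\bm{Q}^k-\bm{Q}^{k-1})$, pick $\bm{P}^{k+1}\in\operatorname{sign}(\bm{P}^k+\bm{X}^T\bm{E}^k/\alpha_k)$, compute a thin SVD $\bm{Q}^k+\bm{X}\bm{P}^{k+1}/\beta_k=\bm{U}^{k+1}\bm{\Sigma}^{k+1}(\bm{V}^{k+1})^T$ and set $\bm{Q}^{k+1}=\bm{U}^{k+1}(\bm{V}^{k+1})^T$. Suppose $\alpha_*\le\alpha_k\le\alpha^*$, $3\beta_*/2\le\beta_k\le\beta^*$ for some $\alpha_*,\alpha^*,\beta_*,\beta^*\in(0,+\infty)$, and $0\le\gamma_k<\gamma^*=\min\{1,\alpha_*\beta_*/(2\|\bm{X}\|^2)\}$ for all $k$. Let $\bm{C}^k=(\bm{P}^k,\bm{Q}^k,\bm{Q}^{k-1})$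 for $k\ge0$. Then: (a) $\{\bm{C}^k\}_{k\ge0}$ is bounded; (b) there is $\kappa_1>0$ such that $\Psi_{\beta_*}(\bm{C}^{k+1})-\Psi_{\beta_*}(\bm{C}^k)\le-\kappa_1\|\bm{C}^{k+1}-\bm{C}^k\|_F^2$ for all $k\ge0$; (c) there is $\kappa_2>0$ such that $\operatorname{dist}(\bm{0},\partial\Psi_{\beta_*}(\bm{C}^{k+1}))\le\kappa_2\|\bm{C}^{k+1}-\bm{C}^k\|_F$ for all $k\ge0$.
   Context: ${\rm St}(d,K)=\{\bm{Q}\in\mathbb{R}^{d\times K}:\bm{Q}^T\bm{Q}=\bm{I}_K\}$; $\mathcal{B}(n,K)$ is the set of $n\times K$ matrices with entries in $\{\pm1\}$; $\langle\bm{A},\bm{B}\rangle=\operatorname{tr}(\bm{A}^T\bm{B})$; $\delta_{\mathcal{S}}$ is the indicator function of $\mathcal{S}$; $\|\bm{X}\|$ is the spectral norm. $\operatorname{sign}(a)=\{a/|a|\}$ for $a\ne0$, $\operatorname{sign}(0)=\{-1,1\}$, applied entrywise to matrices. For a triple, $\|(\bm{P},\bm{Q},\bm{Q}')\|_F^2=\|\bm{P}\|_F^2+\|\bm{Q}\|_F^2+\|\bm{Q}'\|_F^2$. $\partial$ is the limiting subdifferential and $\operatorname{dist}(\bm{0},S)=\inf_{\bm{s}\in S}\|\bm{s}\|_F$. *)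

(* Defs.v *)
From HB Require Import structures.
From mathcomp Require Import all_boot all_order all_algebra.
From mathcomp Require Import boolp classical_sets reals constructive_ereal ereal.
Set Implicit Arguments. Unset Strict Implicit. Unset Printing Implicit Defensive.
Import Order.TTheory GRing.Theory Num.Theory.
Local Open Scope ring_scope.
Local Open Scope classical_set_scope.

Section Defs.
Context {R : realType}.

Definition fro2 {m p : nat} (A : 'M[R]_(m, p)) : R :=
  \sum_(i < m) \sum_(j < p) A i j ^+ 2.
Definition fro {m p : nat} (A : 'M[R]_(m, p)) : R := Num.sqrt (fro2 A).
Definition minner {m p : nat} (A B : 'M[R]_(m, p)) : R := \tr (A^T *m B).

Definition specnorm {m p : nat} (X : 'M[R]_(m, p)) : R :=
  sup [set r | exists v : 'cV[R]_p, fro v = 1 /\ r = fro (X *m v)].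

Definition stiefel {d K : nat} (Q : 'M[R]_(d, K)) : Prop := Q^T *m Q = 1%:M.
Definition binmx {n K : nat} (P : 'M[R]_(n, K)) : Prop :=
  forall i j, P i j = 1 \/ P i j = -1.

Definition in_sign (a b : R) : Prop :=
  if a != 0 then b = a / `|a| else (b = 1 \/ b = -1).

Definition thin_svd {d K : nat} (M U : 'M[R]_(d, K)) (S V : 'M[R]_K) : Prop :=
  stiefel U /\
  (forall i j, i != j -> S i j = 0) /\
  (forall i, 0 <= S i i) /\
  (forall i j : 'I_K, (i <= j)%N -> S j j <= S i i) /\
  V^T *m V = 1%:M /\ M = U *m S *m V^T.

Definition trip (n d K : nat) : Type :=
  ('M[R]_(n, K) * 'M[R]_(d, K) * 'M[R]_(d, K))%type.

Definition tsub {n d K : nat} (a b : trip n d K) : trip n d K :=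
  ((a.1.1 - b.1.1, a.1.2 - b.1.2), a.2 - b.2).
Definition tinner {n d K : nat} (a b : trip n d K) : R :=
  minner a.1.1 b.1.1 + minner a.1.2 b.1.2 + minner a.2 b.2.
Definition tnorm {n d K : nat} (a : trip n d K) : R :=
  Num.sqrt (fro2 a.1.1 + fro2 a.1.2 + fro2 a.2).

Definition tcvg {n d K : nat} (xs : nat -> trip n d K) (x : trip n d K) : Prop :=
  forall eps : R, 0 < eps -> exists N, forall k, (N <= k)%N -> tnorm (tsub (xs k) x) < eps.
Definition rcvg (u : nat -> R) (l : R) : Prop :=
  forall eps : R, 0 < eps -> exists N, forall k, (N <= k)%N -> `|u k - l| < eps.

Definition frechet {n d K : nat} (f : trip n d K -> \bar R) (x v : trip n d K) : Prop :=
  f x \is a fin_num /\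
  forall eps : R, 0 < eps -> exists delta : R, 0 < delta /\
    forall y, tnorm (tsub y x) < delta ->
      (f x + (tinner v (tsub y x) - eps * tnorm (tsub y x))%:E <= f y)%E.

Definition lsubdiff {n d K : nat} (f : trip n d K -> \bar R) (x : trip n d K)
    : set (trip n d K) :=
  [set v | f x \is a fin_num /\
    exists xs vs : nat -> trip n d K,
      [/\ forall k, frechet f (xs k) (vs k), tcvg xs x,
          rcvg (fun k => fine (f (xs k))) (fine (f x)) & tcvg vs v]].

(* dist(0, S) = inf_{s in S} ||s||_F  (= +oo when S is empty) *)
Definition dist0 {n d K : nat} (S : set (trip n d K)) : \bar R :=
  ereal_inf [set (tnorm s)%:E | s in S].

Definition Psi {n d K : nat} (X : 'M[R]_(d, n)) (beta : R) (c : trip n d K) : \bar R :=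
  if `[< binmx c.1.1 /\ stiefel c.1.2 >] then
    (- minner c.1.1 (X^T *m c.1.2) + beta / 2 * fro2 (c.1.2 - c.2))%:E
  else +oo%E.

(* gamma^* = min{1, alpha_* beta_* / (2 ||X||^2)}, with the convention that the
   second term is +oo when X = 0 *)
Definition gamma_star {d n : nat} (X : 'M[R]_(d, n)) (alo blo : R) : R :=
  if specnorm X == 0 then 1 else Num.min 1 (alo * blo / (2 * specnorm X ^+ 2)).

Definition Qprev {d K : nat} (Q : nat -> 'M[R]_(d, K)) (k : nat) : 'M[R]_(d, K) :=
  if k is k'.+1 then Q k' else Q 0%N.

Definition Citer {n d K : nat} (P : nat -> 'M[R]_(n, K)) (Q : nat -> 'M[R]_(d, K))
    (k : nat) : trip n d K := ((P k, Q k), Qprev Q k).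

End Defs.

(* Main.v *)
Require Import Defs.
From HB Require Import structures.
From mathcomp Require Import all_boot all_order all_algebra.
From mathcomp Require Import boolp classical_sets reals constructive_ereal ereal.
From mathcomp Require Import ring lra.
Import Order.TTheory GRing.Theory Num.Theory.
Local Open Scope ring_scope.

Section H.
Context {R : realType}.

Lemma minnerE {m p} (A B : 'M[R]_(m, p)) :
  minner A B = \sum_(i < m) \sum_(j < p) A i j * B i j.
Proof.
rewrite /minner /mxtrace exchange_big /=; apply: eq_bigr => j _.
by rewrite !mxE; apply: eq_bigr => i _; rewrite mxE.
Qed.

Lemma fro2_minner {m p} (A : 'M[R]_(m, p)) : fro2 A = minner A A.
Proof. by rewrite minnerE /fro2; apply: eq_bigr => i _; apply: eq_bigr => j _; rewrite expr2. Qed.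

Lemma minnerC {m p} (A B : 'M[R]_(m, p)) : minner A B = minner B A.
Proof. by rewrite !minnerE; apply: eq_bigr => i _; apply: eq_bigr => j _; rewrite mulrC. Qed.

Lemma minnerDl {m p} (A B C : 'M[R]_(m, p)) : minner (A + B) C = minner A C + minner B C.
Proof.
rewrite !minnerE -big_split /=; apply: eq_bigr => i _; rewrite -big_split /=.
by apply: eq_bigr => j _; rewrite !mxE mulrDl.
Qed.

Lemma minnerZl {m p} a (A C : 'M[R]_(m, p)) : minner (a *: A) C = a * minner A C.
Proof.
rewrite !minnerE mulr_sumr; apply: eq_bigr => i _; rewrite mulr_sumr.
by apply: eq_bigr => j _; rewrite !mxE mulrA.
Qed.

Lemma minnerNl {m p} (A C : 'M[R]_(m, p)) : minner (- A) C = - minner A C.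
Proof. by rewrite -scaleN1r minnerZl mulN1r. Qed.

Lemma minnerBl {m p} (A B C : 'M[R]_(m, p)) : minner (A - B) C = minner A C - minner B C.
Proof. by rewrite minnerDl minnerNl. Qed.

Lemma minnerDr {m p} (A B C : 'M[R]_(m, p)) : minner C (A + B) = minner C A + minner C B.
Proof. by rewrite minnerC minnerDl !(minnerC C). Qed.
Lemma minnerZr {m p} a (A C : 'M[R]_(m, p)) : minner C (a *: A) = a * minner C A.
Proof. by rewrite minnerC minnerZl minnerC. Qed.
Lemma minnerBr {m p} (A B C : 'M[R]_(m, p)) : minner C (A - B) = minner C A - minner C B.
Proof. by rewrite minnerC minnerBl !(minnerC C). Qed.
Lemma minner0l {m p} (C : 'M[R]_(m, p)) : minner 0 C = 0.
Proof. by rewrite -(scale0r 0) minnerZl mul0r. Qed.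

Lemma minner_mul d n K (X : 'M[R]_(d, n)) (A : 'M[R]_(n, K)) (B : 'M[R]_(d, K)) :
  minner A (X^T *m B) = minner (X *m A) B.
Proof. by rewrite /minner trmx_mul mulmxA. Qed.

Lemma fro2_ge0 {m p} (A : 'M[R]_(m, p)) : 0 <= fro2 A.
Proof. by apply: sumr_ge0 => i _; apply: sumr_ge0 => j _; apply: sqr_ge0. Qed.

Lemma fro2_entry {m p} (A : 'M[R]_(m, p)) i j : A i j ^+ 2 <= fro2 A.
Proof.
rewrite /fro2 (bigD1 i) //= (bigD1 j) //= -addrA lerDl.
apply: addr_ge0; first by apply: sumr_ge0 => ? _; apply: sqr_ge0.
by apply: sumr_ge0 => ? _; apply: sumr_ge0 => ? _; apply: sqr_ge0.
Qed.

Lemma fro2Z {m p} a (A : 'M[R]_(m, p)) : fro2 (a *: A) = a ^+ 2 * fro2 A.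
Proof. by rewrite !fro2_minner minnerZl minnerZr mulrA expr2. Qed.

Lemma fro2D {m p} (A B : 'M[R]_(m, p)) : fro2 (A + B) = fro2 A + 2 * minner A B + fro2 B.
Proof. rewrite !fro2_minner minnerDl !minnerDr (minnerC B A); ring. Qed.

Lemma fro2B {m p} (A B : 'M[R]_(m, p)) : fro2 (A - B) = fro2 A - 2 * minner A B + fro2 B.
Proof. rewrite !fro2_minner minnerBl !minnerBr (minnerC B A); ring. Qed.

Lemma stiefel_fro2 d K (Q : 'M[R]_(d, K)) : stiefel Q -> fro2 Q = K%:R.
Proof. by move=> h; rewrite fro2_minner /minner h mxtrace1. Qed.

Lemma minner_diff {m p} (A B : 'M[R]_(m, p)) : fro2 A = fro2 B ->
  minner (B - A) A = - (fro2 (B - A)) / 2.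
Proof. move=> h; rewrite fro2B minnerBl (minnerC B A) -h -fro2_minner; field; by []. Qed.

Lemma young {m p} (t a b : R) (A B : 'M[R]_(m, p)) : 0 <= a -> 0 <= b -> t ^+ 2 <= a * b ->
  2 * t * minner A B <= a * fro2 A + b * fro2 B.
Proof.
move=> a0 b0 hab; rewrite minnerE /fro2 !mulr_sumr -big_split /=.
apply: ler_sum => i _; rewrite !mulr_sumr -big_split /=; apply: ler_sum => j _.
have [a00|ap] := eqVneq a 0.
  have t0 : t = 0.
    apply/eqP; rewrite -sqrf_eq0 eq_le sqr_ge0 andbT.
    by move: hab; rewrite a00 mul0r.
  rewrite t0 a00 !mul0r mulr0 add0r; nra.
have apos : 0 < a by rewrite lt_def ap a0.
set x := A i j; set y := B i j.
have h1 := sqr_ge0 (a * x - t * y).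
have h2 : 0 <= (a * b - t ^+ 2) * y ^+ 2 by apply: mulr_ge0; [lra| apply: sqr_ge0].
rewrite -(ler_pM2l apos); nra.
Qed.


Lemma minner_col {m p} (A B : 'M[R]_(m, p)) i :
  minner (col i A) (col i B) = (A^T *m B) i i.
Proof.
rewrite minnerE mxE; apply: eq_bigr => r _; rewrite big_ord1 !mxE //.
Qed.

Lemma vn_le d K (Q1 U : 'M[R]_(d, K)) (S V : 'M[R]_K) :
  stiefel Q1 -> stiefel U -> V^T *m V = 1%:M ->
  (forall i j, i != j -> S i j = 0) -> (forall i, 0 <= S i i) ->
  minner Q1 (U *m S *m V^T) <= \tr S.
Proof.
move=> hQ hU hV hS0 hS.
have -> : minner Q1 (U *m S *m V^T) = \tr (((Q1 *m V)^T *m U) *m S).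
  rewrite /minner !mulmxA mxtrace_mulC !mulmxA trmx_mul //.
rewrite /mxtrace; apply: ler_sum => i _.
rewrite mxE (bigD1 i) //= big1 ?addr0; last first.
  by move=> j hj; rewrite hS0 ?mulr0 // eq_sym.
rewrite -{2}(mul1r (S i i)); apply: ler_wpM2r => //.
have h := young 1 1 1 (col i (Q1 *m V)) (col i U) ler01 ler01.
rewrite expr1n mulr1 !mul1r in h.
have e1 : fro2 (col i (Q1 *m V)) = 1.
  rewrite fro2_minner minner_col trmx_mul mulmxA -(mulmxA V^T) hQ mulmx1 hV mxE eqxx //.
have e2 : fro2 (col i U) = 1 by rewrite fro2_minner minner_col hU mxE eqxx.
rewrite minner_col e1 e2 in h.
have := h (lexx _); lra.
Qed.

Lemma vn_eq d K (U : 'M[R]_(d, K)) (S V : 'M[R]_K) :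
  stiefel U -> V^T *m V = 1%:M ->
  minner (U *m V^T) (U *m S *m V^T) = \tr S.
Proof.
move=> hU hV; rewrite /minner trmx_mul trmxK !mulmxA -(mulmxA V) hU mulmx1.
by rewrite mxtrace_mulC mulmxA hV mul1mx.
Qed.

Lemma stiefel_polar d K (U : 'M[R]_(d, K)) (V : 'M[R]_K) :
  stiefel U -> V^T *m V = 1%:M -> stiefel (U *m V^T).
Proof.
move=> hU hV; rewrite /stiefel trmx_mul trmxK mulmxA -(mulmxA V) hU mulmx1.
exact: mulmx1C.
Qed.


Lemma fro_sqr {m p} (A : 'M[R]_(m, p)) : fro A ^+ 2 = fro2 A.
Proof. by rewrite /fro sqr_sqrtr // fro2_ge0. Qed.

Lemma fro_ge0 {m p} (A : 'M[R]_(m, p)) : 0 <= fro A.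
Proof. exact: sqrtr_ge0. Qed.

Lemma spec_hassup {d n} (X : 'M[R]_(d, n)) : (0 < n)%N ->
  has_sup [set r | exists v : 'cV[R]_n, fro v = 1 /\ r = fro (X *m v)].
Proof.
move=> n0; split.
  pose i0 : 'I_n := Ordinal n0.
  pose e : 'cV[R]_n := delta_mx i0 0.
  exists (fro (X *m e)), e; split => //.
  rewrite /fro /fro2 (bigD1 i0) //= big_ord1 big1 ?addr0.
    by rewrite mxE !eqxx expr1n sqrtr1.
  by move=> j hj; rewrite big_ord1 mxE (negbTE hj) /= expr0n.
exists (Num.sqrt (\sum_(i < d) \sum_(j < 1) (\sum_(k < n) `|X i k|) ^+ 2)).
move=> r [v [hv ->]]; rewrite /fro ler_sqrt; last first.
  by apply: sumr_ge0 => ? _; apply: sumr_ge0 => ? _; apply: sqr_ge0.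
have hv2 : fro2 v = 1 by rewrite -fro_sqr hv expr1n.
apply: ler_sum => i _; apply: ler_sum => j _; rewrite mxE.
have hb : `|\sum_(k < n) X i k * v k j| <= \sum_(k < n) `|X i k|.
  apply: le_trans (ler_norm_sum _ _ _) _; apply: ler_sum => k _.
  rewrite normrM -{2}(mulr1 `|X i k|); apply: ler_wpM2l => //.
  have := fro2_entry v k j; rewrite hv2 => h.
  by rewrite -(expr_le1 (n:=2)) // real_normK ?num_real.
rewrite -real_normK ?num_real //; apply: lerXn2r => //; rewrite nnegrE //.
apply: sumr_ge0 => *; exact: normr_ge0.
Qed.


Lemma spec_ge0 {d n} (X : 'M[R]_(d, n)) : (0 < n)%N -> 0 <= specnorm X.
Proof.
move=> n0; have hs := spec_hassup X n0; have [[r [v [hv hr]]] _] := hs.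
apply: le_trans (sup_upper_bound hs (ex_intro _ v (conj hv hr))).
by rewrite hr fro_ge0.
Qed.

Lemma spec_vec {d n} (X : 'M[R]_(d, n)) (v : 'cV[R]_n) : (0 < n)%N ->
  fro2 (X *m v) <= specnorm X ^+ 2 * fro2 v.
Proof.
move=> n0; have hs := spec_hassup X n0; have s0 := spec_ge0 X n0.
have [v0|vn0] := eqVneq (fro2 v) 0.
  have -> : v = 0.
    apply/matrixP => i j; rewrite mxE; apply/eqP; rewrite -sqrf_eq0 eq_le sqr_ge0 andbT.
    by rewrite -v0 fro2_entry.
  by rewrite mulmx0 !fro2_minner !minner0l mulr0.
have r0 : 0 < fro v by rewrite /fro sqrtr_gt0 lt_def vn0 fro2_ge0.
pose w := (fro v)^-1 *: v.
have hw : fro w = 1.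
  rewrite /fro fro2Z -fro_sqr exprVn mulVf ?sqrtr1 //.
  by rewrite expf_neq0 // gt_eqF.
have hle := sup_upper_bound hs (ex_intro _ w (conj hw erefl)).
have hXw : fro2 (X *m w) = (fro v)^-2 * fro2 (X *m v) by rewrite -scalemxAr fro2Z exprVn.
have h2 : fro2 (X *m w) <= specnorm X ^+ 2.
  rewrite -fro_sqr; apply: lerXn2r => //; rewrite nnegrE ?fro_ge0 //.
rewrite hXw mulrC in h2.
have f0 : 0 < fro v ^+ 2 by rewrite exprn_gt0.
rewrite ler_pdivrMr // fro_sqr in h2; exact: h2.
Qed.

Lemma fro2_cols {m p} (A : 'M[R]_(m, p)) : fro2 A = \sum_(j < p) fro2 (col j A).
Proof.
rewrite /fro2 exchange_big /=; apply: eq_bigr => j _.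
by apply: eq_bigr => i _; rewrite big_ord1 mxE.
Qed.

Lemma spec_mat {d n K} (X : 'M[R]_(d, n)) (A : 'M[R]_(n, K)) : (0 < n)%N ->
  fro2 (X *m A) <= specnorm X ^+ 2 * fro2 A.
Proof.
move=> n0; rewrite !fro2_cols mulr_sumr; apply: ler_sum => j _.
by rewrite !colE -mulmxA; apply: spec_vec.
Qed.


Lemma sign_entry (a b p : R) : in_sign a b -> (p = 1 \/ p = -1) ->
  (b = 1 \/ b = -1) /\ p * a <= b * a.
Proof.
rewrite /in_sign; case: ifP => [a0 ->|a0 hb] hp; last first.
  have -> : a = 0 by apply/eqP; rewrite -[a == 0]negbK a0.
  by split => //; rewrite !mulr0.
have [ap|an] := ltP 0 a.
  rewrite gtr0_norm // divff ?gt_eqF //; split; first by left.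
  by case: hp => ->; lra.
have an' : a < 0 by rewrite lt_neqAle an a0.
rewrite ltr0_norm // invrN mulrN divff ?lt_eqF //; split; first by right.
by case: hp => ->; lra.
Qed.

Lemma binmx_fro2 {n K} (A B : 'M[R]_(n, K)) : binmx A -> binmx B -> fro2 A = fro2 B.
Proof.
move=> hA hB; apply: eq_bigr => i _; apply: eq_bigr => j _.
by case: (hA i j) => ->; case: (hB i j) => ->; rewrite ?sqrrN.
Qed.

Lemma sign_step {n K} (P0 P1 M : 'M[R]_(n, K)) : binmx P0 ->
  (forall i j, in_sign (M i j) (P1 i j)) -> binmx P1 /\ 0 <= minner (P1 - P0) M.
Proof.
move=> h0 hs; split.
  by move=> i j; have [] := sign_entry _ _ _ (hs i j) (h0 i j).
rewrite minnerE; apply: sumr_ge0 => i _; apply: sumr_ge0 => j _.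
have [_ h] := sign_entry _ _ _ (hs i j) (h0 i j).
rewrite !mxE mulrDl mulNr subr_ge0; exact: h.
Qed.


Lemma stepP {d n K} (X : 'M[R]_(d, n)) (P0 P1 : 'M[R]_(n, K)) (E : 'M[R]_(d, K)) (a : R) :
  0 < a -> binmx P0 ->
  (forall i j, in_sign ((P0 + a^-1 *: (X^T *m E)) i j) (P1 i j)) ->
  binmx P1 /\ a / 2 * fro2 (P1 - P0) <= minner (P1 - P0) (X^T *m E).
Proof.
move=> a0 h0 hs; have [h1 hge] := sign_step _ _ _ h0 hs; split => //.
rewrite minnerDr minnerZr minner_diff ?(binmx_fro2 _ _ h0 h1) // in hge.
set y := minner _ _ in hge *; set f := fro2 _ in hge *.
have -> : y = a * (a^-1 * y) by rewrite mulrA divff ?gt_eqF // mul1r.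
set z := a^-1 * y in hge *; nra.
Qed.

Lemma stepQ {d n K} (X : 'M[R]_(d, n)) (P1 : 'M[R]_(n, K)) (Q0 Q1 : 'M[R]_(d, K)) (b : R) :
  0 < b -> stiefel Q0 ->
  (exists (U : 'M[R]_(d, K)) (S V : 'M[R]_K),
     thin_svd (Q0 + b^-1 *: (X *m P1)) U S V /\ Q1 = U *m V^T) ->
  stiefel Q1 /\ b / 2 * fro2 (Q1 - Q0) <= minner (Q1 - Q0) (X *m P1).
Proof.
move=> b0 h0 [U [S [V [[hU [hS0 [hS [_ [hV hM]]]]] ->]]]].
have hQ1 := stiefel_polar _ _ _ _ hU hV; split => //.
have e1 := vn_eq _ _ _ _ _ hU hV.
have e2 := vn_le _ _ _ _ _ _ h0 hU hV hS0 hS.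
have hge : 0 <= minner (U *m V^T - Q0) (Q0 + b^-1 *: (X *m P1)).
  by rewrite hM minnerBl e1 subr_ge0.
rewrite minnerDr minnerZr minner_diff ?(stiefel_fro2 _ _ _ h0) ?(stiefel_fro2 _ _ _ hQ1) // in hge.
set y := minner _ _ in hge *; set f := fro2 _ in hge *.
have -> : y = b * (b^-1 * y) by rewrite mulrA divff ?gt_eqF // mul1r.
set z := b^-1 * y in hge *; nra.
Qed.

Lemma gamma_bound {d n} (X : 'M[R]_(d, n)) (alo blo g : R) : (0 < n)%N ->
  0 < alo -> 0 < blo -> 0 <= g < gamma_star X alo blo ->
  g ^+ 2 * specnorm X ^+ 2 <= alo * blo / 2.
Proof.
move=> n0 a0 b0 /andP[g0]; rewrite /gamma_star.
have s0 := spec_ge0 X n0.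
case: eqP => [->|sn0]; first by move=> _; nra.
rewrite lt_min => /andP[g1 g2].
have sp : 0 < specnorm X ^+ 2 by rewrite exprn_gt0 // lt_def s0 andbT; apply/eqP.
have sp2 : 0 < 2 * specnorm X ^+ 2 by rewrite mulr_gt0.
rewrite ltr_pdivlMr // in g2.
have : g ^+ 2 * specnorm X ^+ 2 <= g * specnorm X ^+ 2.
  by apply: ler_wpM2r; [apply: ltW | rewrite expr2 ler_piMr // ltW].
nra.
Qed.

Lemma cross {d n K} (X : 'M[R]_(d, n)) (A : 'M[R]_(n, K)) (D : 'M[R]_(d, K)) (alo blo g : R) :
  (0 < n)%N -> 0 < alo -> 0 < blo -> 0 <= g ->
  g ^+ 2 * specnorm X ^+ 2 <= alo * blo / 2 ->
  g * minner A (X^T *m D) <= 3 * alo / 8 * fro2 A + blo / 3 * fro2 D.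
Proof.
move=> n0 a0 b0 g0 hg; rewrite minner_mul.
pose a := 3 * g ^+ 2 / (2 * blo).
have a0' : 0 <= a by rewrite /a; apply: divr_ge0; [apply: mulr_ge0 => //; apply: sqr_ge0| apply: mulr_ge0 => //; apply: ltW].
have ea : a * (2 * blo / 3) = g ^+ 2 by rewrite /a; field; rewrite gt_eqF.
have hab : g ^+ 2 <= a * (2 * blo / 3) by rewrite ea.
have hb : 0 <= 2 * blo / 3 by apply: divr_ge0; [apply: mulr_ge0 => //; apply: ltW|].
have hy := young g a (2 * blo / 3) (X *m A) D a0' hb hab.
have hs := spec_mat X A n0.
have h1 : a * fro2 (X *m A) <= a * (specnorm X ^+ 2 * fro2 A) by apply: ler_wpM2l.
have h2 : a * specnorm X ^+ 2 <= 3 * alo / 4.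
  rewrite /a mulrAC ler_pdivrMr ?mulr_gt0 //. nra.
have f0 := fro2_ge0 A.
have h3 : a * specnorm X ^+ 2 * fro2 A <= 3 * alo / 4 * fro2 A by apply: ler_wpM2r.
rewrite mulrA in h1.
lra.
Qed.


Lemma tnorm_sqr {n d K} (a : @trip R n d K) :
  tnorm a ^+ 2 = fro2 a.1.1 + fro2 a.1.2 + fro2 a.2.
Proof. by rewrite /tnorm sqr_sqrtr // !addr_ge0 // fro2_ge0. Qed.

Lemma tnorm_ge0 {n d K} (a : @trip R n d K) : 0 <= tnorm a.
Proof. exact: sqrtr_ge0. Qed.

Lemma tnorm_self {n d K} (a : @trip R n d K) : tnorm (tsub a a) = 0.
Proof.
rewrite /tnorm /tsub /= !subrr !fro2_minner !minner0l !addr0; exact: sqrtr0.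
Qed.

Lemma frechet_step {n d K} (X : 'M[R]_(d, n)) (blo b : R) (P1 : 'M[R]_(n, K))
  (Q0 Q1 : 'M[R]_(d, K)) :
  0 < blo -> 0 < b -> binmx P1 -> stiefel Q0 ->
  (exists (U : 'M[R]_(d, K)) (S V : 'M[R]_K),
     thin_svd (Q0 + b^-1 *: (X *m P1)) U S V /\ Q1 = U *m V^T) ->
  frechet (Psi X blo) ((P1, Q1), Q0) ((0, (blo - b) *: (Q1 - Q0)), (- blo) *: (Q1 - Q0)).
Proof.
move=> bl0 b0 hP1 hQ0 [U [S [V [[hU [hS0 [hS [_ [hV hM]]]]] eQ1]]]].
have hQ1 : stiefel Q1 by rewrite eQ1; exact: stiefel_polar _ _ _ _ hU hV.
have e1 : minner Q1 (U *m S *m V^T) = \tr S by rewrite eQ1; exact: vn_eq _ _ _ _ _ hU hV.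
have hPsi : Psi X blo ((P1, Q1), Q0) =
    (- minner P1 (X^T *m Q1) + blo / 2 * fro2 (Q1 - Q0))%:E.
  by rewrite /Psi asboolT.
split; first by rewrite hPsi.
move=> eps eps0.
exists (Num.min 1 (eps / b)); split.
  by rewrite lt_min ltr01 divr_gt0.
move=> [[Y0 Y1] Y2]; rewrite lt_min => /andP[t1 t2].
set t := tnorm _ in t1 t2.
have t0 : 0 <= t by apply: tnorm_ge0.
have ht : t ^+ 2 = fro2 (Y0 - P1) + fro2 (Y1 - Q1) + fro2 (Y2 - Q0) by rewrite /t tnorm_sqr.
rewrite hPsi /Psi /=.
case: (pselect (binmx Y0 /\ stiefel Y1)) => [[hY0 hY1]|hn]; last first.
  by rewrite asboolF // leey.
rewrite asboolT //.
have eY0 : Y0 = P1.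
  apply/matrixP => i j.
  have h1 := fro2_entry (Y0 - P1) i j.
  have h2 := fro2_ge0 (Y1 - Q1); have h3 := fro2_ge0 (Y2 - Q0).
  have h4 : t ^+ 2 < 1 by nra.
  move: h1; rewrite !mxE.
  by case: (hY0 i j) => ->; case: (hP1 i j) => -> => // h1; nra.
subst Y0.
rewrite -EFinD lee_fin /tinner /=.
rewrite minner0l add0r !minnerZl.
have hXP : X *m P1 = b *: (U *m S *m V^T - Q0).
  by rewrite -hM addrC addKr scalerA divff ?gt_eqF // scale1r.
set D := Y1 - Q1.
have eY1 : Y1 = Q1 + D by rewrite /D addrC subrK.
have hle : minner Y1 (U *m S *m V^T) <= \tr S by exact: vn_le _ _ _ _ _ _ hY1 hU hV hS0 hS.
have hD : minner D Q1 = - fro2 D / 2 by apply: minner_diff; rewrite (stiefel_fro2 _ _ _ hQ1) (stiefel_fro2 _ _ _ hY1).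
have hfD : fro2 D <= t ^+ 2.
  have := fro2_ge0 (P1 - P1); have := fro2_ge0 (Y2 - Q0); rewrite ht /D; lra.
set D' := Y2 - Q0.
have eY2 : Y2 = Q0 + D' by rewrite /D' addrC subrK.
have hmain : minner P1 (X^T *m Y1) = minner P1 (X^T *m Q1) + b * (minner (U *m S *m V^T) D - minner Q0 D).
  by rewrite eY1 mulmxDr minnerDr [minner P1 (X^T *m D)]minner_mul hXP minnerZl minnerBl.
have hM1 : minner (U *m S *m V^T) D <= 0.
  by rewrite /D minnerBr subr_le0 minnerC (minnerC _ Q1) e1.
have hfro : fro2 (Y1 - Y2) = fro2 (Q1 - Q0) + 2 * (minner Q1 D - minner Q0 D - minner (Q1 - Q0) D') + fro2 (D - D').
  rewrite eY1 eY2 (_ : Q1 + D - (Q0 + D') = (Q1 - Q0) + (D - D')); last first.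
    by rewrite opprD addrACA.
  by rewrite fro2D minnerBr minnerBl.
rewrite hmain hfro.
rewrite (minnerC D Q1) in hD.
have hf0 := fro2_ge0 (D - D').
have hbt : b * t <= eps by rewrite -ler_pdivlMl // mulrC; apply: ltW.
have hbt2 : b * t ^+ 2 <= eps * t by rewrite expr2 mulrA; apply: ler_wpM2r.
have hbD : b * fro2 D <= b * t ^+ 2 by apply: ler_wpM2l => //; apply: ltW.
have hbM : b * minner (U *m S *m V^T) D <= 0 by rewrite pmulr_rle0.
rewrite minnerBl.
set mQ1 := minner Q1 D in hD *; set mQ0 := minner Q0 D in hmain *.
set mM := minner (U *m S *m V^T) D in hbM *.
have hbQ : b * mQ1 = - (b * fro2 D) / 2 by rewrite hD; field.
rewrite -/t.
nra.
Qed.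

End H.

Theorem proposition6 (R : realType) (d n K : nat) (X : 'M[R]_(d, n))
  (alpha beta gamma : nat -> R) (alo ahi blo bhi : R)
  (P : nat -> 'M[R]_(n, K)) (Q : nat -> 'M[R]_(d, K)) :
  (1 <= K)%N -> (K <= n)%N -> (K <= d)%N ->
  0 < alo -> 0 < ahi -> 0 < blo -> 0 < bhi ->
  (forall k, alo <= alpha k <= ahi) ->
  (forall k, 3 * blo / 2 <= beta k <= bhi) ->
  (forall k, 0 <= gamma k < gamma_star X alo blo) ->
  binmx (P 0%N) -> stiefel (Q 0%N) ->
  (forall k i j,
     in_sign ((P k + (alpha k)^-1 *:
                 (X^T *m (Q k + gamma k *: (Q k - Qprev Q k)))) i j)
             (P k.+1 i j)) ->
  (forall k, exists (U : 'M[R]_(d, K)) (S V : 'M[R]_K),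
     thin_svd (Q k + (beta k)^-1 *: (X *m P k.+1)) U S V /\
     Q k.+1 = U *m V^T) ->
  [/\ (exists M : R, forall k, tnorm (Citer P Q k) <= M),
      (exists kappa1 : R, 0 < kappa1 /\ forall k,
         (Psi X blo (Citer P Q k.+1) - Psi X blo (Citer P Q k)
          <= (- (kappa1 * tnorm (tsub (Citer P Q k.+1) (Citer P Q k)) ^+ 2))%:E)%E)
    & (exists kappa2 : R, 0 < kappa2 /\ forall k,
         (dist0 (lsubdiff (Psi X blo) (Citer P Q k.+1))
          <= (kappa2 * tnorm (tsub (Citer P Q k.+1) (Citer P Q k)))%:E)%E)].
Proof.
move=> hK1 hKn hKd a0 ah0 b0 bh0 hal hbe hga hP0 hQ0 hsign hsvd.
have n0 : (0 < n)%N by apply: leq_trans hKn.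
have alP : forall k, 0 < alpha k.
  by move=> k; have /andP[h _] := hal k; apply: lt_le_trans h.
have beP : forall k, 0 < beta k.
  move=> k; have /andP[h _] := hbe k; apply: lt_le_trans h.
  by apply: divr_gt0 => //; apply: mulr_gt0.
have feas : forall k, binmx (P k) /\ stiefel (Q k).
  elim=> [|k [hp hq]]; first by [].
  split; first by have [] := stepP X (P k) (P k.+1) (Q k + gamma k *: (Q k - Qprev Q k)) (alpha k) (alP k) hp (hsign k).
  by have [] := stepQ X (P k.+1) (Q k) (Q k.+1) (beta k) (beP k) hq (hsvd k).
split.
- exists (Num.sqrt (fro2 (const_mx 1 : 'M[R]_(n, K)) + K%:R + K%:R)) => k.
  have [hp hq] := feas k.
  have hqp : stiefel (Qprev Q k) by case: k hp hq => [|k] //= _ _; have [] := feas k.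
  have hc : binmx (const_mx 1 : 'M[R]_(n, K)) by move=> i j; rewrite mxE; left.
  rewrite /tnorm /Citer /= (binmx_fro2 _ _ hp hc) (stiefel_fro2 _ _ _ hq) (stiefel_fro2 _ _ _ hqp).
  by [].
- exists (Num.min alo blo / 8); split.
    by apply: divr_gt0 => //; rewrite lt_min a0 b0.
  move=> k.
  have [hp hq] := feas k; have [hp1 hq1] := feas k.+1.
  have hqp : stiefel (Qprev Q k) by case: k hp hq hp1 hq1 => [|k] //= _ _ _ _; have [] := feas k.
  have [_ FP] := stepP X (P k) (P k.+1) (Q k + gamma k *: (Q k - Qprev Q k)) (alpha k) (alP k) hp (hsign k).
  have [_ FQ] := stepQ X (P k.+1) (Q k) (Q k.+1) (beta k) (beP k) hq (hsvd k).
  have g0 : 0 <= gamma k by have /andP[] := hga k.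
  have gb := gamma_bound X alo blo (gamma k) n0 a0 b0 (hga k).
  have cr := cross X (P k.+1 - P k) (Q k - Qprev Q k) alo blo (gamma k) n0 a0 b0 g0 gb.
  rewrite mulmxDr -scalemxAr minnerDr minnerZr in FP.
  have rel : minner (P k.+1) (X^T *m Q k.+1) = minner (Q k.+1 - Q k) (X *m P k.+1)
      + minner (P k.+1 - P k) (X^T *m Q k) + minner (P k) (X^T *m Q k).
    rewrite [minner (Q k.+1 - Q k) _]minnerC -minner_mul mulmxBr minnerBr minnerBl; ring.
  rewrite /Psi /Citer /= !asboolT // -EFinB lee_fin tnorm_sqr /= rel.
  set a2 := fro2 (P k.+1 - P k) in FP cr *.
  set c2 := fro2 (Q k.+1 - Q k) in FQ *.
  set b2 := fro2 (Q k - Qprev Q k) in cr *.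
  have a2p : 0 <= a2 by apply: fro2_ge0.
  have b2p : 0 <= b2 by apply: fro2_ge0.
  have c2p : 0 <= c2 by apply: fro2_ge0.
  set kap := Num.min alo blo.
  have ka : kap <= alo by rewrite /kap ge_min lexx.
  have kb : kap <= blo by rewrite /kap ge_min lexx orbT.
  have h1 : 0 <= (beta k - 3 * blo / 2) * c2 by apply: mulr_ge0 => //; have /andP[h _] := hbe k; rewrite subr_ge0.
  have h2 : 0 <= (alpha k - alo) * a2 by apply: mulr_ge0 => //; have /andP[h _] := hal k; rewrite subr_ge0.
  have h3 : 0 <= (alo - kap) * a2 by apply: mulr_ge0 => //; rewrite subr_ge0.
  have h4 : 0 <= (blo - kap) * (c2 + b2) by apply: mulr_ge0; rewrite ?subr_ge0 ?addr_ge0.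
  nra.
- exists (bhi + blo); split; first by rewrite addr_gt0.
  move=> k.
  have [hp1 hq1] := feas k.+1; have [hp hq] := feas k.
  set v : trip n d K := ((0, (blo - beta k) *: (Q k.+1 - Q k)), (- blo) *: (Q k.+1 - Q k)).
  have fr := frechet_step X blo (beta k) (P k.+1) (Q k) (Q k.+1) b0 (beP k) hp1 hq (hsvd k).
  have ec : Citer P Q k.+1 = ((P k.+1, Q k.+1), Q k) by [].
  have hin : lsubdiff (Psi X blo) (Citer P Q k.+1) v.
    rewrite ec; split; first by case: fr.
    exists (fun _ => ((P k.+1, Q k.+1), Q k)), (fun _ => v); split => //.
    + by move=> e e0; exists 0%N => j _; rewrite tnorm_self.
    + by move=> e e0; exists 0%N => j _; rewrite subrr normr0.
    + by move=> e e0; exists 0%N => j _; rewrite tnorm_self.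
  apply: le_trans (ereal_inf_lbound _) _; first by exists v.
  rewrite lee_fin.
  have kp : 0 <= bhi + blo by rewrite addr_ge0 // ltW.
  have ek : bhi + blo = Num.sqrt ((bhi + blo) ^+ 2) by rewrite sqrtr_sqr ger0_norm.
  rewrite /tnorm {1}ek -sqrtrM ?sqr_ge0 // ler_sqrt; last first.
    by apply: mulr_ge0; rewrite ?sqr_ge0 // !addr_ge0 // fro2_ge0.
  rewrite /v /Citer /= !fro2Z fro2_minner minner0l add0r.
  set a2 := fro2 (P k.+1 - P k).
  set c2 := fro2 (Q k.+1 - Q k).
  set b2 := fro2 (Q k - Qprev Q k).
  have a2p : 0 <= a2 by apply: fro2_ge0.
  have b2p : 0 <= b2 by apply: fro2_ge0.
  have c2p : 0 <= c2 by apply: fro2_ge0.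
  have /andP[bl bh] := hbe k.
  have hk : (blo - beta k) ^+ 2 + (- blo) ^+ 2 <= (bhi + blo) ^+ 2 by nra.
  have h1 : 0 <= ((bhi + blo) ^+ 2 - ((blo - beta k) ^+ 2 + (- blo) ^+ 2)) * c2 by apply: mulr_ge0; rewrite ?subr_ge0.
  have h2 : 0 <= (bhi + blo) ^+ 2 * (a2 + b2) by apply: mulr_ge0; rewrite ?sqr_ge0 ?addr_ge0.
  nra.
Qed.
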